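(* Let $n$ be even and consider the problem BPAOAZ (defined in the context). The expected running time of $\text{EMPMO}_{\text{payoff}}$ applied to BPAOAZ is bounded by $O(n\log n)$.
   Context: BPAOAZ: for $\mathbf{x}=(x_1,\dots,x_n)\in\{0,1\}^n$ with $n$ even, party 1 has objectives $f_{11}(\mathbf{x})=\sum_{i=n/2+1}^{n}x_i$ and $f_{12}(\mathbf{x})=\sum_{i=1}^{n/2}x_i+\sum_{i=n/2+1}^{n}(1-x_i)$; party 2 has objectives $f_{21}(\mathbf{x})=\sum_{i=1}^{n/2}(1-x_i)+\sum_{i=n/2+1}^{n}x_i$ and $f_{22}(\mathbf{x})=\sum_{i=1}^{n/2}x_i$; all objectives are maximized. The common Pareto set (solutions Pareto optimal for both parties) is $\{1^n\}$. One-bit mutation flips one uniformly random bit. Multi-party payoff: for party $m\in\{1,2\}$ and solutions $\mathbf{x},\mathbf{x}'$, $\pi_m(\mathbf{x},\mathbf{x}')=1$ if $f_{mk}(\mathbf{x}')\ge f_{mk}(\mathbf{x})$ for all $k\in\{1,2\}$; $\pi_m(\mathbf{x},\mathbf{x}')=-1$ if (not the previous case and) $f_{mk}(\mathbf{x}')\le f_{mk}(\mathbf{x})$ for all $k$; and $0$ otherwise. The multi-party payoff is $\pi_{\mathbf{x},\mathbf{x}'}=\pi_1(\mathbf{x},\mathbf{x}')+\pi_2(\mathbf{x},\mathbf{x}')$. $\text{EMPMO}_{\text{payoff}}$: choose $\mathbf{x}$ uniformly from $\{0,1\}^n$, $P=\{\mathbf{x}\}$. Each iteration: pick $\mathbf{x}\in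 P$ uniformly at random, apply one-bit mutation to get $\mathbf{x}'$, and if $\pi_{\mathbf{x},\mathbf{x}'}>0$ set $P\leftarrow(P\setminus\{\mathbf{x}\})\cup\{\mathbf{x}'\}$. The running time is the number of fitness evaluations (mutations) until the common Pareto-optimal solution is included in the population for the first time. *)

(* Defs.v *)
From HB Require Import structures.
From mathcomp Require Import all_boot all_order all_algebra.
From mathcomp Require Import reals exp.
Set Implicit Arguments. Unset Strict Implicit. Unset Printing Implicit Defensive.
Import Order.TTheory GRing.Theory Num.Theory.

(* Bit strings x = (x_1,...,x_n) in {0,1}^n; bit x_{i+1} is x i, i : 'I_n. *)
Definition bits (n : nat) := {ffun 'I_n -> bool}.

(* first half: 1-based indices 1..n/2, i.e. 0-based i < n/2 *)
Definition fstHalf n (i : 'I_n) : bool := (i < n %/ 2)%N.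

(* BPAOAZ objectives (all maximized) *)
Definition f11 n (x : bits n) : nat := #|[pred i | ~~ fstHalf i & x i]|.
Definition f12 n (x : bits n) : nat :=
  #|[pred i | fstHalf i & x i]| + #|[pred i | ~~ fstHalf i & ~~ x i]|.
Definition f21 n (x : bits n) : nat :=
  #|[pred i | fstHalf i & ~~ x i]| + #|[pred i | ~~ fstHalf i & x i]|.
Definition f22 n (x : bits n) : nat := #|[pred i | fstHalf i & x i]|.

Definition obj n (m k : bool) (x : bits n) : nat :=
  match m, k with
  | false, false => f11 x | false, true => f12 x
  | true, false => f21 x | true, true => f22 x end.

Definition party_payoff n (m : bool) (x x' : bits n) : int :=
  if [forall k : bool, obj m k x <= obj m k x']%N then 1%R
  else if [forall k : bool, obj m k x' <= obj m k x]%N then (-1)%R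
  else 0%R.

Definition payoff n (x x' : bits n) : int :=
  (party_payoff false x x' + party_payoff true x x')%R.

Definition flip n (x : bits n) (i : 'I_n) : bits n :=
  [ffun j => if j == i then ~~ x j else x j].

(* one iteration of EMPMO_payoff when bit i is chosen for mutation
   (the population is always a singleton {x}) *)
Definition step n (x : bits n) (i : 'I_n) : bits n :=
  if (0 < payoff x (flip x i))%R then flip x i else x.

Definition ones n : bits n := [ffun => true].

Section Chain.
Variable R : realType.
Local Open Scope ring_scope.

Definition trans n (x y : bits n) : R :=
  (#|[pred i : 'I_n | step x i == y]|)%:R / n%:R.

(* surv n t y = Pr[ after t mutations the population is {y} and the
   common Pareto optimum 1^n has not been in the population at any time <= t ],
   initial x uniform on {0,1}^n *)
Fixpoint surv (n : nat) (t : nat) (y : bits n) : R :=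
  if y == ones n then 0 else
  match t with
  | 0 => (#|{: bits n}|%:R)^-1
  | t'.+1 => \sum_(x : bits n) @surv n t' x * trans x y
  end.

(* Pr[T > t], T = running time (number of fitness evaluations) *)
Definition tail_prob n (t : nat) : R := \sum_(y : bits n) @surv n t y.

(* E[T] = sum_{t >= 0} Pr[T > t]; its partial sums *)
Definition exp_time_partial n (N : nat) : R := \sum_(t < N) tail_prob n t.
End Chain.

(* Main.v *)
Require Import Defs.
From HB Require Import structures.
From mathcomp Require Import all_boot all_order all_algebra.
From mathcomp Require Import reals exp.
From mathcomp Require Import zify.
Import Order.TTheory GRing.Theory Num.Theory.
Set Implicit Arguments. Unset Strict Implicit. Unset Printing Implicit Defensive.

Definition cnt n (x : bits n) (p b : bool) : nat :=
  #|[pred j | (fstHalf j == p) && (x j == b)]|.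

Lemma card_flip n (x : bits n) i p b :
  (cnt (flip x i) p b + ((fstHalf i == p) && (x i == b)) =
   cnt x p b + ((fstHalf i == p) && (~~ x i == b)))%N.
Proof.
rewrite /cnt (cardD1 i [pred j | _]) (cardD1 i [pred j | (fstHalf j == p) && (x j == b)]).
have -> : #|[predD1 [pred j | (fstHalf j == p) && (flip x i j == b)] & i]| =
          #|[predD1 [pred j | (fstHalf j == p) && (x j == b)] & i]|.
  apply: eq_card => j; rewrite !inE /flip ffunE.
  by case: (eqVneq j i).
rewrite !inE /flip ffunE eqxx.
set u := nat_of_bool _; set v := nat_of_bool _; set w := #|_|; lia.
Qed.

Lemma forall_bool (P : pred bool) : [forall k : bool, P k] = P false && P true.
Proof.
apply/forallP/andP => [H | [H1 H2] [] //]; by split; apply: H.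
Qed.

Lemma f11E n (x : bits n) : f11 x = cnt x false true.
Proof. by apply: eq_card => j; rewrite !inE; case: fstHalf; case: (x j). Qed.
Lemma f22E n (x : bits n) : f22 x = cnt x true true.
Proof. by apply: eq_card => j; rewrite !inE; case: fstHalf; case: (x j). Qed.
Lemma f12E n (x : bits n) : f12 x = (cnt x true true + cnt x false false)%N.
Proof. by congr addn; apply: eq_card => j; rewrite !inE; case: fstHalf; case: (x j). Qed.
Lemma f21E n (x : bits n) : f21 x = (cnt x true false + cnt x false true)%N.
Proof. by congr addn; apply: eq_card => j; rewrite !inE; case: fstHalf; case: (x j). Qed.

Lemma stepE n (x : bits n) i : step x i = if x i then x else flip x i.
Proof.
have e1 := card_flip x i true true.
have e2 := card_flip x i true false.
have e3 := card_flip x i false true.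
have e4 := card_flip x i false false.
rewrite /step /payoff /party_payoff !forall_bool /obj !f11E !f22E !f12E !f21E.
move: e1 e2 e3 e4.
case: (fstHalf i); case: (x i) => /= e1 e2 e3 e4;
repeat match goal with |- context [if (?a && ?b) then _ else _] =>
  let E := fresh "E" in case E: (a && b) end; rewrite //=; lia.
Qed.

From mathcomp Require Import lra.
Local Open Scope ring_scope.

Definition G (R : realType) (z : nat) : R := if z is 0%N then 0 else 1 + ln (z%:R).

Lemma G_ge0 (R : realType) z : 0 <= G R z.
Proof.
case: z => [|z] /=; first by [].
have := @ln_ge0 R z.+1%:R; rewrite ler1n => /(_ isT); lra.
Qed.

Lemma G_le (R : realType) z n : (1 <= n)%N -> (z <= n)%N -> G R z <= 1 + ln n%:R.
Proof.
move=> n1 zn; case: z zn => [|z] zn /=.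
  have := @ln_ge0 R n%:R; rewrite ler1n => /(_ n1); lra.
rewrite lerD2l ler_ln ?posrE ?ltr0n // ?ler_nat //; lia.
Qed.

Lemma G_drift (R : realType) z : (1 <= z)%N -> G R z.-1 + z%:R^-1 <= G R z.
Proof.
case: z => [//|[|k]] _ /=.
  by rewrite ln1 invr1 add0r addr0.
set m : R := k.+2%:R.
have m0 : 0 < m by rewrite ltr0n.
have e : k.+1%:R = m * (1 + - m^-1).
  by rewrite mulrDr mulr1 mulrN mulfV ?gt_eqF // /m [in RHS]mulrSr addrK.
have h1 : 0 < 1 + - m^-1.
  rewrite subr_gt0 invf_lt1 // /m ltr1n //.
rewrite e lnM ?posrE //.
have : ln (1 + - m^-1) <= - m^-1.
  apply: le_ln1Dx. rewrite ltrN2 invf_lt1 // /m ltr1n //.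
move=> h; set a := ln _ in h *; set b := m^-1 in h *; set c := ln m; lra.
Qed.

Lemma ln_half (R : realType) n : (2 <= n)%N -> 1 <= 2 * ln (n%:R : R).
Proof.
move=> n2.
have n0 : (0 : R) < n%:R by rewrite ltr0n; lia.
have h : ln (1 + ((n%:R : R)^-1 - 1)) <= (n%:R : R)^-1 - 1.
  apply: le_ln1Dx. rewrite ltrBrDr addNr invr_gt0 //.
rewrite addrC subrK lnV ?posrE // in h.
have : (n%:R : R)^-1 <= 2^-1.
  rewrite lef_pV2 ?posrE // ?ler_nat //.
lra.
Qed.

Definition zc n (x : bits n) : nat := #|[pred j | ~~ x j]|.
Definition phi (R : realType) n (x : bits n) : R := n%:R * G R (zc x).

Lemma zc_flip n (x : bits n) i : x i = false -> (zc (flip x i)).+1 = zc x.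
Proof.
move=> xi.
rewrite /zc (cardD1 i [pred j | ~~ flip x i j]) (cardD1 i [pred j | ~~ x j]).
have -> : #|[predD1 [pred j | ~~ flip x i j] & i]| = #|[predD1 [pred j | ~~ x j] & i]|.
  apply: eq_card => j; rewrite !inE /flip ffunE.
  by case: (eqVneq j i).
by rewrite !inE /flip ffunE eqxx xi.
Qed.

Lemma zc_ones n : zc (ones n) = 0%N.
Proof. by apply: eq_card0 => j; rewrite !inE /ones ffunE. Qed.

Lemma zc_le n (x : bits n) : (zc x <= n)%N.
Proof. by rewrite /zc; have := max_card [pred j | ~~ x j]; rewrite card_ord. Qed.

Lemma zc_pos n (x : bits n) : x != ones n -> (1 <= zc x)%N.
Proof.
move=> H; rewrite lt0n; apply: contra H => /eqP z0.
apply/eqP/ffunP => j; rewrite ffunE; apply/negPn/negP => hj.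
by move: z0; rewrite /zc (cardD1 j) inE hj.
Qed.

Lemma phi_ones (R : realType) n : phi R (ones n) = 0.
Proof. by rewrite /phi zc_ones /= mulr0. Qed.

Lemma phi_ge0 (R : realType) n (x : bits n) : 0 <= phi R x.
Proof. by rewrite /phi mulr_ge0 ?ler0n ?G_ge0. Qed.

Lemma trans_sum (R : realType) n (x : bits n) (F : bits n -> R) :
  \sum_y trans R x y * F y = n%:R^-1 * \sum_i F (step x i).
Proof.
rewrite (partition_big (fun i => step x i) predT) //= mulr_sumr.
apply: eq_bigr => y _.
rewrite (eq_bigr (fun _ => F y)); last by move=> i; rewrite ?andTb => /eqP ->.
rewrite sumr_const /trans -[F y *+ _]mulr_natr mulrCA mulrC [n%:R^-1 * _]mulrC; congr (_ * (_%:R * _)); apply: eq_card => i; rewrite !inE.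
Qed.

Lemma drift (R : realType) n (x : bits n) : x != ones n ->
  \sum_y trans R x y * phi R y <= phi R x - 1.
Proof.
move=> hx; rewrite trans_sum.
have z1 := zc_pos hx.
have zn := zc_le x.
set z := zc x in z1 zn *.
have n0 : (0 : R) < n%:R by rewrite ltr0n; lia.
have z0 : (0 : R) < z%:R by rewrite ltr0n; lia.
have hb : forall i, phi R (step x i) <= phi R x - (~~ x i)%:R * (n%:R / z%:R).
  move=> i; rewrite stepE; case xi: (x i) => /=.
    by rewrite mul0r subr0.
  rewrite mul1r /phi.
  have -> : zc (flip x i) = z.-1 by have := zc_flip xi; rewrite -/z; lia.
  have d := G_drift R z1.
  set a := G R z.-1 in d *; set b := G R z in d *.
  set c := (z%:R : R)^-1 in d *.
  nra.
have hs : \sum_i phi R (step x i) <= \sum_(i < n) (phi R x - (~~ x i)%:R * (n%:R / z%:R)).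
  by apply: ler_sum => i _; apply: hb.
have hz : \sum_(i < n) ((~~ x i)%:R : R) = z%:R.
  rewrite -natr_sum; congr (_%:R).
  rewrite (eq_bigr (fun i => if ~~ x i then 1%N else 0%N)); last by move=> i _; case: (x i).
  by rewrite -big_mkcond /= sum1_card.
rewrite sumrB sumr_const card_ord -mulr_suml hz in hs.
have e : z%:R * (n%:R / z%:R) = (n%:R : R) by rewrite mulrC mulfVK ?gt_eqF.
rewrite e -mulr_natr in hs.
have ni : (0 : R) <= n%:R^-1 by rewrite invr_ge0 ltW.
apply: (le_trans (ler_wpM2l ni hs)).
by rewrite mul1r -[phi R x *+ n]mulr_natr mulrBr mulrCA !mulVf ?gt_eqF // mulr1.
Qed.

Lemma trans_ge0 (R : realType) n (x y : bits n) : 0 <= trans R x y.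
Proof. by rewrite /trans divr_ge0 ?ler0n. Qed.

Lemma surv_ge0 (R : realType) n t (y : bits n) : 0 <= surv R t y.
Proof.
elim: t y => [|t IH] y /=; case: eqP => _ //.
  by rewrite invr_ge0 ler0n.
by apply: sumr_ge0 => x _; rewrite mulr_ge0 ?IH ?trans_ge0.
Qed.

Lemma surv_ones (R : realType) n t : surv R t (ones n) = 0.
Proof. by case: t => [|t] /=; rewrite eqxx. Qed.

Definition Phi (R : realType) n t : R := \sum_(y : bits n) surv R t y * phi R y.

Lemma Phi_step (R : realType) n t : Phi R n t.+1 + tail_prob R n t <= Phi R n t.
Proof.
have -> : Phi R n t.+1 = \sum_(y : bits n) (\sum_x surv R t x * trans R x y) * phi R y.
  apply: eq_bigr => y _ /=; case: eqP => [->|//].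
  by rewrite phi_ones !mulr0.
under eq_bigr do rewrite mulr_suml.
rewrite exchange_big /=.
under eq_bigr do under eq_bigr do rewrite -mulrA.
under eq_bigr do rewrite -mulr_sumr.
suff : \sum_(x : bits n) surv R t x * (\sum_(y : bits n) trans R x y * phi R y) <=
       \sum_(x : bits n) (surv R t x * phi R x - surv R t x).
  by rewrite sumrB /Phi /tail_prob; lra.
apply: ler_sum => x _.
case: (eqVneq x (ones n)) => [->|hx].
  by rewrite surv_ones !mul0r subrr.
rewrite -[X in _ <= _ - X]mulr1 -mulrBr.
by apply: ler_wpM2l; [apply: surv_ge0 | apply: drift].
Qed.

Lemma Phi_ge0 (R : realType) n t : 0 <= Phi R n t.
Proof. by apply: sumr_ge0 => y _; rewrite mulr_ge0 ?surv_ge0 ?phi_ge0. Qed.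

Lemma partial_le (R : realType) n N : exp_time_partial R n N <= Phi R n 0 - Phi R n N.
Proof.
elim: N => [|N IH]; first by rewrite /exp_time_partial big_ord0 subrr.
rewrite /exp_time_partial big_ord_recr /=.
have := Phi_step R n N.
rewrite /exp_time_partial in IH.
lra.
Qed.

Lemma Phi0_le (R : realType) n : (1 <= n)%N -> Phi R n 0 <= n%:R * (1 + ln n%:R).
Proof.
move=> n1.
have cp : (0 : R) < #|{: bits n}|%:R.
  by rewrite ltr0n; apply/card_gt0P; exists (ones n).
have M0 : (0 : R) <= n%:R * (1 + ln n%:R).
  by rewrite mulr_ge0 ?ler0n // (le_trans (G_ge0 R n)) // G_le.
apply: (le_trans (y := \sum_(y : bits n) (#|{: bits n}|%:R^-1 * (n%:R * (1 + ln n%:R))))).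
  apply: ler_sum => y _; apply: ler_pM; rewrite ?surv_ge0 ?phi_ge0 //.
    by rewrite /=; case: eqP => _ //; rewrite invr_ge0 ltW.
  by rewrite /phi ler_wpM2l ?ler0n // G_le // zc_le.
rewrite sumr_const.
rewrite -[X in X <= _]mulr_natr mulrC mulrA.
set c := (#|_|%:R : R).
have -> : c = #|{: bits n}|%:R by rewrite /c; apply/congr1/eq_card.
rewrite mulfV ?gt_eqF // mul1r.
by []. Qed.

Theorem theorem3 (R : realType) :
  exists (c : R) (N0 : nat), 0 < c /\
    forall n : nat, ~~ odd n -> (N0 <= n)%N ->
      forall N : nat, exp_time_partial R n N <= c * n%:R * ln (n%:R : R).
Proof.
exists 3, 2%N; split => // n _ n2 N.
have h1 := partial_le R n N.
have h2 := Phi_ge0 R n N.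
have h3 := Phi0_le R (ltnW n2).
have h4 := ln_half R n2.
have n0 : (0 : R) <= n%:R by [].
set L := ln (n%:R : R) in h3 h4 *.
set m := (n%:R : R) in h3 n0 *.
nra.
Qed.
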